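(* Let $E$ be a non-empty set and let $S:(E\times[0,1]\times\{0,1\})^*\to(-\infty,\infty]$ be a forecast-continuous supermartingale. Then for any $T\ge1$ and any $e_1,\dots,e_T\in E$, $\pi_1,\dots,\pi_{T-1}\in[0,1]$, $\omega_1,\dots,\omega_{T-1}\in\{0,1\}$, there exists $\pi\in[0,1]$ such that for both $\omega=0$ and $\omega=1$, $$S(e_1,\pi_1,\omega_1,\dots,e_{T-1},\pi_{T-1},\omega_{T-1},e_T,\pi,\omega)\le S(e_1,\pi_1,\omega_1,\dots,e_{T-1},\pi_{T-1},\omega_{T-1}).$$
   Context: $(E\times[0,1]\times\{0,1\})^*$ denotes the set of finite sequences of triples. A function $S:(E\times[0,1]\times\{0,1\})^*\to(-\infty,\infty]$ is a (game-theoretic) supermartingale if for any $T$, any $e_1,\dots,e_T\in E$, any $\pi_1,\dots,\pi_T\in[0,1]$ and any $\omega_1,\dots,\omega_{T-1}\in\{0,1\}$, $\pi_T S(e_1,\pi_1,\omega_1,\dots,e_T,\pi_T,1)+(1-\pi_T)S(e_1,\pi_1,\omega_1,\dots,e_T,\pi_T,0)\le S(e_1,\pi_1,\omega_1,\dots,e_{T-1},\pi_{T-1},\omega_{T-1})$. It is forecast-continuous if for all $T\ge1$, all $e_1,\dots,e_T\in E$, all $\pi_1,\dots,\pi_{T-1}\in[0,1]$ and all $\omega_1,\dots,\omega_T\in\{0,1\}$, the map $\pi\mapsto S(e_1,\pi_1,\omega_1,\dots,e_{T-1},\pi_{T-1},\omega_{T-1},e_T,\pi,\omega_T)$ is continuous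 on $[0,1]$. *)

(* Defs.v *)
From HB Require Import structures.
From mathcomp Require Import all_boot all_order all_algebra.
From mathcomp Require Import all_classical all_reals all_analysis.
Set Implicit Arguments. Unset Strict Implicit. Unset Printing Implicit Defensive.
Import Order.TTheory GRing.Theory Num.Theory.
Local Open Scope classical_set_scope.
Local Open Scope ring_scope.

(* Histories are finite sequences of triples (e_t, pi_t, omega_t), listed in
   chronological order (earliest first); omega_t : bool encodes {0,1}
   (true = 1, false = 0). *)

Definition hist_ok (R : realType) (E : Type) (h : seq (E * R * bool)) : bool :=
  all (fun t => (0 <= t.1.2) && (t.1.2 <= 1)) h.

Definition no_neg_infty (R : realType) (E : Type)
  (S : seq (E * R * bool) -> \bar R) : Prop :=
  forall h, hist_ok h -> S h != -oo%E.

Definition supermartingale (R : realType) (E : Type)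
  (S : seq (E * R * bool) -> \bar R) : Prop :=
  forall (h : seq (E * R * bool)) (e : E) (p : R),
    hist_ok h -> 0 <= p <= 1 ->
    (p%:E * S (rcons h (e, p, true)) + (1 - p)%:E * S (rcons h (e, p, false))
       <= S h)%E.

Definition forecast_continuous (R : realType) (E : Type)
  (S : seq (E * R * bool) -> \bar R) : Prop :=
  forall (h : seq (E * R * bool)) (e : E) (w : bool),
    hist_ok h ->
    {within `[0, 1], continuous (fun p : R => S (rcons h (e, p, w)))}.

(* Main.v *)
Require Import Defs.
From HB Require Import structures.
From mathcomp Require Import all_boot all_order all_algebra.
From mathcomp Require Import all_classical all_reals all_analysis.
From mathcomp Require Import ring.
Import Order.TTheory GRing.Theory Num.Theory numFieldNormedType.Exports.
Local Open Scope classical_set_scope.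
Local Open Scope ring_scope.

Lemma Lnb (R : realType) (f : R -> \bar R) (c : R) (x : R) :
  {within `[0, 1], continuous f} -> x \in `[0, 1] -> (c%:E < f x)%E ->
  nbhs x (fun p => p \in `[0, 1] -> (c%:E < f p)%E).
Proof.
move=> /subspace_continuousP hc hx hlt.
have := hc x hx [set y | (c%:E < y)%E].
rewrite /from_subspace /=.
move=> /(_ (open_ereal_gt' hlt)).
by [].
Qed.

Theorem lemma1 (R : realType) (E : Type) (hE : inhabited E)
  (S : seq (E * R * bool) -> \bar R)
  (hS : no_neg_infty S) (hsup : supermartingale S)
  (hcont : forecast_continuous S)
  (h : seq (E * R * bool)) (e : E) :
  hist_ok h ->
  exists p : R, 0 <= p <= 1 /\
    forall w : bool, (S (rcons h (e, p, w)) <= S h)%E.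
Proof.
move=> hh.
case Hc: (S h) => [c| |]; last first.
- by have := hS h hh; rewrite Hc.
- by exists 0; split; [rewrite lexx ler01 | move=> w; rewrite leey].
pose f w p := S (rcons h (e, p, w)).
have okI p w : p \in `[0, 1] -> hist_ok (rcons h (e, p, w)).
  by rewrite in_itv /= => hp; rewrite /hist_ok all_rcons /= hp.
have finf p w : p \in `[0, 1] -> f w p != -oo%E by move=> hp; exact: hS (okI p w hp).
have sup p : p \in `[0, 1] ->
    (p%:E * f true p + (1 - p)%:E * f false p <= c%:E)%E.
  by move=> hp; rewrite -Hc; apply: hsup => //; rewrite in_itv /= in hp.
have I0 : (0:R) \in `[0, 1] by rewrite in_itv /= lexx ler01.
have I1 : (1:R) \in `[0, 1] by rewrite in_itv /= lexx ler01.
have F0 : (f false 0%R <= c%:E)%E.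
  by have := sup 0 I0; rewrite mul0e add0e subr0 mul1e.
have F1 : (f true 1%R <= c%:E)%E.
  by have := sup 1 I1; rewrite mul1e subrr mul0e adde0.
have K p : p \in `[0, 1] -> (f true p <= c%:E)%E \/ (f false p <= c%:E)%E.
  move=> hp; apply: contrapT => /not_orP [/negP]; rewrite -ltNge => h1 /negP.
  rewrite -ltNge => h0.
  have := hp; rewrite in_itv /= => /andP [p0 p1].
  move: p0; rewrite le_eqVlt => /orP [/eqP p0|p0].
    by move: h0; rewrite -p0 ltNge F0.
  move: p1; rewrite le_eqVlt => /orP [/eqP p1|p1].
    by move: h1; rewrite p1 ltNge F1.
  have := sup p hp; apply/negP; rewrite -ltNge.
  have -> : c%:E = (p%:E * c%:E + (1 - p)%:E * c%:E)%E.
    by rewrite -!EFinM -EFinD; congr EFin; ring.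
  apply: lteD.
    by rewrite lte_pmul2l // lte_fin.
  by rewrite lte_pmul2l // lte_fin subr_gt0.
apply: contrapT => Hno.
have H p : p \in `[0, 1] -> (f true p <= c%:E)%E -> (f false p <= c%:E)%E -> False.
  move=> hp a b; apply: Hno; exists p; split; first by rewrite in_itv /= in hp.
  by case.
have hf w : {within `[0, 1], continuous (f w)} by exact: hcont.
have := @segment_connected R 0 1.
move/connectedP => /(_ (fun b => if b then [set p | p \in `[0, 1] /\ ~ (f true p <= c%:E)%E]
                             else [set p | p \in `[0, 1] /\ (f true p <= c%:E)%E])).
apply; split.
- case.
    exists 0; split => //; move=> a; exact: H I0 a F0.
  by exists 1; split.
- apply/seteqP; split => x /=.
    by move=> hx; case: (pselect (f true x <= c%:E)%E) => ?; [left|right].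
  by case => -[].
- split.
  + apply/seteqP; split => x //= [cx [hx nx]].
    have hlt : (c%:E < f true x)%E by rewrite ltNge; apply/negP.
    have [p [[hp a] b]] := cx _ (@Lnb _ _ _ _ (hf true) hx hlt).
    by move: (b hp); rewrite ltNge a.
  + apply/seteqP; split => x //= [[hx a] cx].
    have hlt : (c%:E < f false x)%E.
      by rewrite ltNge; apply/negP => b; exact: H hx a b.
    have [p [[hp nb] b]] := cx _ (@Lnb _ _ _ _ (hf false) hx hlt).
    case: (K p hp) => // b'.
    by move: (b hp); rewrite ltNge b'.
Qed.
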